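(* There exist absolute constants $c, C > 0$ and $m_0$ such that the following holds for every integer $m \geq m_0$. Let $s = \lceil \log_2 m \rceil + 2$, $k = m^2 s$ and $n = km$. Partition $[n]$ into blocks $B_1,\ldots,B_m$ with $|B_i| = k$, choose $T_i \subset B_i$ with $|T_i| = s$, put $T = \bigcup_i T_i$, and let $\mathcal{F} \subset \mathcal{P}([n])$ be the union-closed family generated by $\{B_i \cup \{t\} : i \in [m],\ t \in T\}$. Then both $\mathrm{AOD}(\mathcal{F})$ and the average abundance $\mathbb{E}_{x \in [n]}[\gamma_x] = \frac1n\sum_{x\in[n]}\gamma_x$ lie between $c\,\frac{\log_2\log_2|\mathcal{F}|}{\log_2|\mathcal{F}|}$ and $C\,\frac{\log_2\log_2|\mathcal{F}|}{\log_2|\mathcal{F}|}$.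
   Context: $[n] = \{1,\ldots,n\}$. A family of sets is union-closed if it contains the union of any two of its members; the union-closed family generated by $\mathcal{G}$ is the smallest union-closed family containing $\mathcal{G}$. For a finite nonempty family $\mathcal{F} \subset \mathcal{P}(X)$ and $x \in X$, the abundance is $\gamma_x = |\{A \in \mathcal{F} : x \in A\}|/|\mathcal{F}|$. For $\mathcal{F} \neq \emptyset,\{\emptyset\}$, the average overlap density is $\mathrm{AOD}(\mathcal{F}) = \frac{1}{|\mathcal{F}\setminus\{\emptyset\}|}\sum_{A \in \mathcal{F}\setminus\{\emptyset\}} \frac{1}{|A|}\sum_{x \in A}\gamma_x$. *)

(* Defs.v *)
From Stdlib Require Import Reals.
From mathcomp Require Import all_boot all_order all_algebra.
From mathcomp Require Import Rstruct.
Set Implicit Arguments. Unset Strict Implicit. Unset Printing Implicit Defensive.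
Import Order.TTheory GRing.Theory Num.Theory.
Local Open Scope ring_scope.

Definition union_closed (T : finType) (F : {set {set T}}) : bool :=
  [forall A in F, forall B in F, (A :|: B) \in F].

Definition uc_gen (T : finType) (G : {set {set T}}) : {set {set T}} :=
  \bigcap_(H : {set {set T}} | union_closed H && (G \subset H)) H.

Definition abundance (T : finType) (F : {set {set T}}) (x : T) : R :=
  (#|[set A in F | x \in A]|%:R : R) / (#|F|%:R : R).

Definition AOD (T : finType) (F : {set {set T}}) : R :=
  ((#|F :\ set0|%:R : R)^-1) *
  \sum_(A in F :\ set0) ((#|A|%:R : R)^-1 * \sum_(x in A) abundance F x).

Definition avg_abundance (n : nat) (F : {set {set 'I_n}}) : R :=
  ((n%:R : R)^-1) * \sum_(x : 'I_n) abundance F x.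

Definition log2 (x : R) : R := ln x / ln 2%:R.

Definition block_family (m n : nat) (B Ts : 'I_m -> {set 'I_n})
  : {set {set 'I_n}} :=
  let Tall := \bigcup_(i : 'I_m) Ts i in
  uc_gen (\bigcup_(i : 'I_m) [set B i :|: [set t] | t in Tall]).

(* Main.v *)
Require Import Defs.
From Stdlib Require Import Reals Lra.
From mathcomp Require Import all_boot all_order all_algebra.
From mathcomp Require Import Rstruct zify.
Set Implicit Arguments. Unset Strict Implicit. Unset Printing Implicit Defensive.
Import Order.TTheory GRing.Theory Num.Theory.


Lemma sum_sets (I : finType) (a b : nat) :
  \sum_(J : {set I}) a ^ #|~: J| * b ^ #|J| = (a + b) ^ #|I|.
Proof.
have E : (a + b) ^ #|I| = \prod_(i : I) \sum_(x : bool) (if x then b else a).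
  rewrite (eq_bigr (fun _ => a + b)); last by move=> i _; rewrite big_bool /= addnC.
  by rewrite prod_nat_const.
rewrite E bigA_distr_bigA.
rewrite (reindex (fun J : {set I} => [ffun i => i \in J])); last first.
  exists (fun f : {ffun I -> bool} => [set i | f i]) => [J _|f _].
    by apply/setP => i; rewrite inE ffunE.
  by apply/ffunP => i; rewrite ffunE inE.
apply: eq_bigr => J _; rewrite (bigID (mem J)) /= mulnC.
congr (_ * _).
  rewrite (eq_bigr (fun _ => b)); last by move=> i iJ; rewrite ffunE iJ.
  by rewrite prod_nat_const.
rewrite (eq_bigr (fun _ => a)); last by move=> i iJ; rewrite ffunE (negbTE iJ).
rewrite -prod_nat_const; apply: eq_bigl => i; by rewrite inE.
Qed.

Lemma pow_bound (a j : nat) : j <= a -> (a + 1) ^ j * (a - j) <= a ^ j.+1.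
Proof.
elim: j => [|j IH] ja; first by rewrite expn0 mul1n subn0 expn1.
have h1 : (a + 1) * (a - j.+1) <= a * (a - j) by nia.
have := IH (ltnW ja) => IH'.
rewrite expnS (mulnC (a+1)) -mulnA.
apply: leq_trans (leq_mul (leqnn ((a+1)^j)) h1) _.
rewrite mulnCA (expnS a (j.+1)); exact: leq_mul (leqnn a) IH'.
Qed.

Lemma pow_bound2 (a m : nat) : 2 * m <= a -> (a + 1) ^ m <= 2 * a ^ m.
Proof.
move=> ma.
case: (posnP a) => [a0|apos].
  have m0 : m = 0 by lia.
  by rewrite m0 !expn0.
have H := pow_bound (j:=m) (a:=a) ltac:(lia).
rewrite -(leq_pmul2r apos).
apply: leq_trans (_ : (a + 1) ^ m * (2 * (a - m)) <= _).
  apply: leq_mul => //; lia.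
rewrite mulnCA -mulnA; apply: leq_mul => //.
by rewrite -expnSr.
Qed.

Section Comb.
Variables (n m s : nat) (B Ts : 'I_m -> {set 'I_n}).
Hypothesis HBd : forall i j, i != j -> [disjoint B i & B j].
Hypothesis HTB : forall i, Ts i \subset B i.
Hypothesis HTs : forall i, #|Ts i| = s.
Hypothesis Hs : 0 < s.

Let T := \bigcup_(i : 'I_m) Ts i.
Let F := block_family B Ts.

Definition good (A : {set 'I_n}) := [exists i, B i \subset A] &&
  [forall x in A, (x \in T) || [exists j, (x \in B j) && (B j \subset A)]].

Lemma inBB i j x : x \in B i -> x \in B j -> i = j.
Proof.
move=> xi xj; case: (eqVneq i j) => // ne.
have := HBd ne; rewrite -setI_eq0 => /eqP E.
have : x \in B i :&: B j by rewrite inE xi xj.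
by rewrite E inE.
Qed.

Lemma F_good A : A \in F -> good A.
Proof.
move=> AF; suff: A \in [set A | good A] by rewrite inE.
move: A AF; apply/subsetP; rewrite /F /block_family /uc_gen; apply: bigcap_inf.
apply/andP; split.
  apply/forallP => A; apply/implyP; rewrite inE => gA.
  apply/forallP => A'; apply/implyP; rewrite inE => gA'; rewrite inE.
  case/andP: gA => /existsP [i Hi] /forallP HA.
  case/andP: gA' => _ /forallP HA'.
  apply/andP; split.
    by apply/existsP; exists i; exact: subset_trans Hi (subsetUl _ _).
  apply/forallP => x; apply/implyP; rewrite inE => /orP [xA|xA'].
    move: (HA x); rewrite xA /= => /orP [->//|/existsP [j /andP [xj Hs']]].
    by apply/orP; right; apply/existsP; exists j; rewrite xj (subset_trans Hs' (subsetUl _ _)).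
  move: (HA' x); rewrite xA' /= => /orP [->//|/existsP [j /andP [xj Hs']]].
  by apply/orP; right; apply/existsP; exists j; rewrite xj (subset_trans Hs' (subsetUr _ _)).
apply/subsetP => A /bigcupP [i _ /imsetP [t tT ->]]; rewrite inE.
apply/andP; split; first by apply/existsP; exists i; exact: subsetUl.
apply/forallP => x; apply/implyP; rewrite inE => /orP [xB | /set1P ->].
  by apply/orP; right; apply/existsP; exists i; rewrite xB subsetUl.
by rewrite tT.
Qed.

Lemma mem_F i (S : {set 'I_n}) : S \subset T -> B i :|: S \in F.
Proof.
rewrite /F /block_family /uc_gen => ST; apply/bigcapP => H /andP [uH gH].
have uc : forall A A', A \in H -> A' \in H -> A :|: A' \in H.
  by move=> A A' AH A'H; move/forallP: uH => /(_ A) /implyP /(_ AH) /forallP /(_ A') /implyP /(_ A'H).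
have gen : forall t, t \in T -> B i :|: [set t] \in H.
  move=> t tT; apply: (subsetP gH); apply/bigcupP; exists i => //; apply/imsetP; by exists t.
suff : forall k (S : {set 'I_n}), #|S| = k -> S \subset T -> B i :|: S \in H by apply.
elim=> [|k IH] S' cS ST'.
  move/cards0_eq: cS => ->; rewrite setU0.
  have : 0 < #|Ts i| by rewrite HTs.
  rewrite card_gt0 => /set0Pn [t0 t0T].
  have -> : B i = B i :|: [set t0].
    by apply/esym/setUidPl; rewrite sub1set (subsetP (HTB i)).
  apply: gen; apply/bigcupP; by exists i.
have : 0 < #|S'| by rewrite cS.
rewrite card_gt0 => /set0Pn [x xS].
have -> : B i :|: S' = (B i :|: (S' :\ x)) :|: (B i :|: [set x]).
  apply/setP => y; rewrite !inE; case: (y \in B i) => //=.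
  case: (eqVneq y x) => [->|]; by rewrite ?xS ?orbT ?orbF.
apply: uc; last by apply: gen; apply: (subsetP ST').
apply: IH; first by rewrite (cardsD1 x S') xS in cS; case: cS.
exact: subset_trans (subsetDl _ _) ST'.
Qed.


Definition W (J : {set 'I_m}) := \bigcup_(j in J) Ts j.

Lemma card_W J : #|W J| = #|J| * s.
Proof.
have -> : W J = \bigcup_j (if j \in J then Ts j else set0) by rewrite /W big_mkcond.
rewrite -sum1_card partition_disjoint_bigcup; last first.
  move=> i j ne; case: ifP => _; last by rewrite -setI_eq0 set0I.
  case: ifP => _; last by rewrite -setI_eq0 setI0.
  exact: disjointWl (HTB i) (disjointWr (HTB j) (HBd ne)).
rewrite (eq_bigr (fun j => if j \in J then s else 0%N)); last first.
  by move=> j _; case: ifP => _; rewrite sum1_card ?HTs ?cards0.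
by rewrite -big_mkcond sum_nat_const.
Qed.

Lemma card_T : #|T| = (m * s)%N.
Proof.
have -> : T = W setT by rewrite /W /T; apply: eq_bigl => j; rewrite inE.
by rewrite card_W cardsT card_ord.
Qed.

Definition U i := T :\: B i.

Lemma U_W i : U i = W (~: [set i]).
Proof.
apply/setP => x; rewrite inE; apply/andP/bigcupP.
  case=> xnB /bigcupP [j _ xj]; exists j => //; rewrite !inE.
  apply: contra xnB => /eqP <-. exact: (subsetP (HTB j)).
case=> j; rewrite !inE => ji xj; split; last by apply/bigcupP; exists j.
apply/negP => xi; have := inBB xi (subsetP (HTB j) _ xj).
by move=> E; rewrite E eqxx in ji.
Qed.

Lemma card_U i : #|U i| = ((m - 1) * s)%N.
Proof. by rewrite U_W card_W cardsC1 card_ord subn1. Qed.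

Lemma key_inj i (S : {set 'I_n}) : S \subset U i -> (B i :|: S) :\: B i = S.
Proof.
move=> SU; apply/setP => x; rewrite !inE; case xB: (x \in B i) => //=.
apply/esym/negbTE/negP => xS; move: (subsetP SU x xS); by rewrite inE xB.
Qed.

Lemma inj_U i : {in powerset (U i) &, injective (fun S => B i :|: S)}.
Proof.
move=> S S'; rewrite !powersetE => SU S'U E.
by rewrite -(key_inj SU) E key_inj.
Qed.

Lemma cnt_lb i : 2 ^ ((m - 1) * s) <= #|[set A in F | B i \subset A]|.
Proof.
rewrite -(card_U i) -card_powerset -(card_in_imset (@inj_U i)).
apply: subset_leq_card; apply/subsetP => _ /imsetP [S SU ->].
rewrite inE mem_F ?subsetUl //.
rewrite powersetE in SU; exact: subset_trans SU (subsetDl _ _).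
Qed.


Lemma recon i A : A \in F -> B i \subset A ->
  A = B i :|: \bigcup_(j in [set j | (j != i) && (B j \subset A)]) B j :|: (A :&: U i).
Proof.
move=> AF BA; apply/setP => x; apply/idP/idP; last first.
  rewrite !in_setU => /orP [/orP [xB|/bigcupP [j jJ xj]] | ].
  - exact: (subsetP BA).
  - by rewrite inE in jJ; case/andP: jJ => _ BjA; exact: (subsetP BjA).
  - by rewrite inE => /andP [].
move=> xA; rewrite !in_setU; case xB: (x \in B i) => //=.
case xT: (x \in T).
  by apply/orP; right; rewrite /U !inE xB xT xA.
have := F_good AF; case/andP => _ /forallP /(_ x); rewrite xA xT /=.
case/existsP => j /andP [xj BjA]; apply/orP; left; apply/bigcupP; exists j => //.
rewrite inE BjA andbT; apply/eqP => ji; by rewrite -ji xj in xB.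
Qed.

Lemma cnt_ub i : 2 * m <= 2 ^ s ->
  #|[set A in F | B i \subset A]| <= 2 * 2 ^ ((m - 1) * s).
Proof.
move=> Hms; set Fi := [set A in F | B i \subset A].
pose phi (A : {set 'I_n}) := ([set j | (j != i) && (B j \subset A)], A :&: U i).
pose Z := [set p : {set 'I_m} * {set 'I_n} |
   (i \notin p.1) && (p.2 \subset U i) && (W p.1 \subset p.2)].
have inj : {in Fi &, injective phi}.
  move=> A A'; rewrite !inE => /andP [AF BA] /andP [A'F BA'] [E1 E2].
  by rewrite (recon AF BA) (recon A'F BA') E1 E2.
have sub : phi @: Fi \subset Z.
  apply/subsetP => _ /imsetP [A AA ->]; rewrite inE in AA; case/andP: AA => AF BA.
  rewrite inE /= inE eqxx /= subsetIr /=.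
  apply/subsetP => x /bigcupP [j]; rewrite inE => /andP [ji BjA] xj.
  rewrite inE (subsetP BjA _ (subsetP (HTB j) _ xj)) /=.
  rewrite U_W; apply/bigcupP; exists j => //; by rewrite !inE.
have cZ : #|Z| = \sum_(J : {set 'I_m}) \sum_(R : {set 'I_n})
     ((i \notin J) && (R \subset U i) && (W J \subset R) : nat).
  rewrite -sum1_card big_mkcond pair_big /=; apply: eq_bigr => -[J R] _ /=.
  by rewrite inE /=; case: (_ && _).
have cR : forall J : {set 'I_m}, i \notin J -> \sum_(R : {set 'I_n})
     ((i \notin J) && (R \subset U i) && (W J \subset R) : nat)
     <= 2 ^ ((m - 1) * s - #|J| * s).
  move=> J iJ; rewrite iJ /=.
  have WU : W J \subset U i.
    apply/subsetP => x /bigcupP [j jJ xj]; rewrite U_W; apply/bigcupP; exists j => //.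
    rewrite !inE; apply/eqP => ji; move: iJ; by rewrite -ji jJ.
  have -> : \sum_(R : {set 'I_n}) ((R \subset U i) && (W J \subset R) : nat)
      = #|[set R : {set 'I_n} | (R \subset U i) && (W J \subset R)]|.
    rewrite -sum1_card [RHS]big_mkcond; apply: eq_bigr => R _; rewrite inE.
    by case: (_ && _).
  apply: (leq_trans (subset_leq_card (_ : _ \subset
     (fun R' : {set 'I_n} => R' :|: W J) @: powerset (U i :\: W J)))).
    apply/subsetP => R; rewrite inE => /andP [RU WR]; apply/imsetP => /=.
    exists (R :\: W J); first by rewrite powersetE setSD.
    apply/setP => x; rewrite !inE; case: (boolP (x \in W J)) => xW /=; [exact: (subsetP WR) | by rewrite orbF].
  apply: (leq_trans (leq_imset_card _ _)).
  by rewrite card_powerset cardsD (setIidPr WU) card_U card_W.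
have termwise : forall J : {set 'I_m}, (\sum_(R : {set 'I_n})
     ((i \notin J) && (R \subset U i) && (W J \subset R) : nat)) * (2 ^ s) ^ m
     <= 2 ^ ((m - 1) * s) * ((2 ^ s) ^ #|~: J| * 1 ^ #|J|).
  move=> J; have : (i \in J) || (i \notin J) by case: (i \in J).
  case/orP => [iJ|iJ'].
    by rewrite big1 // => R _; rewrite iJ.
  apply: leq_trans (leq_mul (cR J iJ') (leqnn _)) _.
  have cJ : #|J| <= m - 1.
    apply: leq_trans (subset_leq_card (_ : J \subset ~: [set i])) _; last first.
      by rewrite cardsC1 card_ord subn1.
    apply/subsetP => j jJ; rewrite !inE; apply/eqP => ji; by rewrite -ji jJ in iJ'.
  have cC : #|~: J| = m - #|J| by have := cardsC J; rewrite card_ord; lia.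
  rewrite exp1n muln1 cC -!expnM -!expnD; apply: eq_leq; congr (2 ^ _).
  rewrite -mulnBl (mulnC s) (mulnC s) -!mulnDl; congr (_ * _); lia.
have am : 0 < (2 ^ s) ^ m by rewrite !expn_gt0.
rewrite -(leq_pmul2r am).
apply: (@leq_trans (#|Z| * (2 ^ s) ^ m)).
  rewrite leq_mul2r; apply/orP; right.
  by rewrite -(card_in_imset inj); exact: subset_leq_card.
rewrite cZ big_distrl /=.
apply: leq_trans; first by apply: leq_sum => J _; exact: termwise.
rewrite -big_distrr /= sum_sets card_ord.
rewrite (mulnC 2) -mulnA leq_mul2l; apply/orP; right.
exact: pow_bound2.
Qed.

Lemma A_big A : A \in F -> exists i, B i \subset A.
Proof. by move/F_good => /andP [/existsP [i Hi] _]; exists i. Qed.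

Lemma x_notT x i : x \in B i -> x \notin T ->
  [set A in F | x \in A] \subset [set A in F | B i \subset A].
Proof.
move=> xi xT; apply/subsetP => A; rewrite !inE => /andP [AF xA]; rewrite AF /=.
move/F_good: AF => /andP [_ /forallP /(_ x)]; rewrite xA (negbTE xT) /=.
by case/existsP => j /andP [xj BjA]; rewrite (inBB xi xj).
Qed.

Lemma x_lb x i : x \in B i ->
  [set A in F | B i \subset A] \subset [set A in F | x \in A].
Proof.
move=> xi; apply/subsetP => A; rewrite !inE => /andP [-> BA] /=.
exact: (subsetP BA).
Qed.

Lemma N_ub : #|F| <= \sum_i #|[set A in F | B i \subset A]|.
Proof.
rewrite -sum1_card.
apply: (@leq_trans (\sum_(A in F) \sum_i ((B i \subset A) : nat))).
  apply: leq_sum => A AF; have [i Hi] := A_big AF.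
  by rewrite (bigD1 i) //= Hi.
rewrite exchange_big; apply: leq_sum => i _.
rewrite -sum1_card [X in _ <= X]big_mkcond /= big_mkcond /=.
apply: leq_sum => A _; rewrite inE; by case: (A \in F); case: (B i \subset A).
Qed.

Lemma N_lb : (forall i, s < #|B i|) -> m * 2 ^ ((m - 1) * s) <= #|F|.
Proof.
move=> HBk.
pose G i := (fun S => B i :|: S) @: powerset (U i).
have cG : forall i, #|G i| = 2 ^ ((m - 1) * s).
  by move=> i; rewrite card_in_imset ?card_powerset ?card_U //; exact: inj_U.
have disj : forall i j, i != j -> [disjoint G i & G j].
  move=> i j ne; rewrite -setI_eq0; apply/eqP/setP => A; rewrite !inE.
  apply/negbTE/negP => /andP [/imsetP [S SU ->] /imsetP [S' SU' E]].
  have BjT : B j \subset Ts j.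
    apply/subsetP => x xj.
    have : x \in B i :|: S by rewrite E inE xj.
    rewrite inE => /orP [xi|xS].
      by move: (inBB xi xj) => ij; rewrite ij eqxx in ne.
    rewrite powersetE in SU; move: (subsetP SU x xS); rewrite inE => /andP [_].
    case/bigcupP => l _ xl; by rewrite -(inBB (subsetP (HTB l) _ xl) xj).
  by move: (subset_leq_card BjT); rewrite HTs leqNgt HBk.
apply: (@leq_trans #|\bigcup_i G i|).
  rewrite -sum1_card partition_disjoint_bigcup //.
  rewrite (eq_bigr (fun _ => 2 ^ ((m - 1) * s))); last by move=> i _; rewrite sum1_card cG.
  by rewrite sum_nat_const card_ord.
apply: subset_leq_card; apply/subsetP => A /bigcupP [i _ /imsetP [S SU ->]].
rewrite mem_F //; rewrite powersetE in SU; exact: subset_trans SU (subsetDl _ _).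
Qed.

End Comb.


Local Open Scope R_scope.

Lemma div_le (a b c d : R) : 0 < b -> 0 < d -> a * d <= c * b -> a / b <= c / d.
Proof.
intros Hb Hd H. apply (Rmult_le_reg_r (b * d)); [nra|].
replace (a / b * (b * d)) with (a * d) by (field; lra).
replace (c / d * (b * d)) with (c * b) by (field; lra). lra.
Qed.

Lemma ln_le' (x y : R) : 0 < x -> x <= y -> ln x <= ln y.
Proof.
intros Hx Hxy. destruct (Rle_lt_or_eq_dec _ _ Hxy) as [H|H].
- left; apply ln_increasing; lra.
- subst; lra.
Qed.

Lemma INR2 : INR 2 = 2. Proof. simpl; lra. Qed.
Lemma INR4 : INR 4 = 4. Proof. simpl; lra. Qed.

Lemma natle (a b : nat) : (a <= b)%N -> INR a <= INR b.
Proof. move/ssrnat.leP; apply: le_INR. Qed.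

Lemma INR_muln (a b : nat) : INR (a * b)%N = INR a * INR b.
Proof. exact: mult_INR. Qed.

Lemma INR_expn (a e : nat) : INR (a ^ e)%N = INR a ^ e.
Proof. elim: e => [|e IH]; first by rewrite expn0. by rewrite expnS INR_muln IH. Qed.

Lemma ln2pow (e : nat) : ln (2 ^ e) = INR e * ln 2.
Proof. apply: ln_pow; lra. Qed.

Lemma Lcore (m s N : nat) : (2 <= m)%N -> (4 <= s)%N ->
  (2 ^ (s - 2) <= (m - 1) * s)%N -> ((m + 1) * s <= 2 ^ (2 * s))%N ->
  (2 ^ ((m - 1) * s) <= N)%N -> (N <= 2 ^ ((m + 1) * s))%N ->
  let p := ln 2 in let Y := ln (INR N) / p in
  1 / (4 * INR m) <= (ln Y / p) / Y /\ (ln Y / p) / Y <= 4 / INR m.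
Proof.
move=> m2 s4 h1 h2 h3 h4 p Y.
have pp : 0 < p by have := ln_lt_2; rewrite /p; lra.
set e1 := ((m - 1) * s)%N. set e2 := ((m + 1) * s)%N.
have e1p : 0 < INR e1 by apply: lt_0_INR; apply/ssrnat.ltP; rewrite /e1; nia.
have Np : 0 < INR N by apply: lt_0_INR; apply/ssrnat.ltP; have := expn_gt0 2 e1; lia.
have HN1 : INR e1 * p <= ln (INR N).
  rewrite /p -ln2pow; apply: ln_le'; first by apply: pow_lt; lra.
  by rewrite -INR2 -INR_expn; apply: natle.
have HN2 : ln (INR N) <= INR e2 * p.
  rewrite /p -ln2pow; apply: ln_le' => //.
  by rewrite -INR2 -INR_expn; apply: natle.
have Y1 : INR e1 <= Y.
  rewrite /Y; apply: (Rmult_le_reg_r p) => //.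
  replace (ln (INR N) / p * p) with (ln (INR N)) by (field; lra); lra.
have Y2 : Y <= INR e2.
  rewrite /Y; apply: (Rmult_le_reg_r p) => //.
  replace (ln (INR N) / p * p) with (ln (INR N)) by (field; lra); lra.
have Yp : 0 < Y by lra.
have lY1 : INR (s - 2) <= ln Y / p.
  apply: (Rmult_le_reg_r p) => //.
  replace (ln Y / p * p) with (ln Y) by (field; lra).
  rewrite /p -ln2pow; apply: ln_le'; first by apply: pow_lt; lra.
  apply: Rle_trans Y1; by rewrite -INR2 -INR_expn; apply: natle.
have lY2 : ln Y / p <= INR (2 * s).
  apply: (Rmult_le_reg_r p) => //.
  replace (ln Y / p * p) with (ln Y) by (field; lra).
  rewrite /p -ln2pow; apply: ln_le' => //.
  apply: Rle_trans Y2 _; by rewrite -INR2 -INR_expn; apply: natle.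
have mp : 0 < INR m by apply: lt_0_INR; apply/ssrnat.ltP; lia.
have s2p : 0 <= INR (s - 2) by apply: pos_INR.
split.
  apply: Rle_trans (_ : 1 / (4 * INR m) <= INR (s - 2) / INR e2) _.
    apply: div_le; [nra | lra |].
    rewrite Rmult_1_l; replace 4 with (INR 4) by (simpl; lra); rewrite -!INR_muln.
    by apply: natle; rewrite /e2; nia.
  apply: Rle_trans (_ : INR (s - 2) / INR e2 <= INR (s - 2) / Y) _.
    apply: div_le; lra || nra.
  apply: div_le; nra.
apply: Rle_trans (_ : ln Y / p / Y <= INR (2 * s) / INR e1) _.
  apply: div_le; nra.
apply: div_le; [lra | lra |].
replace 4 with (INR 4) by (simpl; lra); rewrite -!INR_muln.
by apply: natle; rewrite /e1; nia.
Qed.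

Local Close Scope R_scope.
Local Open Scope ring_scope.

Lemma Lbound (m s N : nat) : (2 <= m)%N -> (4 <= s)%N ->
  (2 ^ (s - 2) <= (m - 1) * s)%N -> ((m + 1) * s <= 2 ^ (2 * s))%N ->
  (2 ^ ((m - 1) * s) <= N)%N -> (N <= 2 ^ ((m + 1) * s))%N ->
  let L := log2 (log2 N%:R) / log2 N%:R in
  1 / (4 * m%:R) <= L /\ L <= 4 / m%:R.
Proof.
move=> h1 h2 h3 h4 h5 h6 L.
have := Lcore h1 h2 h3 h4 h5 h6; rewrite /= => -[H1 H2].
rewrite /L /log2 -!INRE INR2 -!RdivE -RmultE.
by rewrite INR4; split; apply/RleP.
Qed.


From mathcomp Require Import ring lra.
Local Open Scope ring_scope.

Lemma frac_le (a b c d : nat) : (0 < b)%N -> (0 < d)%N -> (c * b <= a * d)%N ->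
  c%:R / d%:R <= a%:R / b%:R :> R.
Proof.
move=> b0 d0 H.
rewrite ler_pdivrMr ?ltr0n // mulrAC ler_pdivlMr ?ltr0n // -!natrM ler_nat.
by [].
Qed.

Lemma avg_bounds (T : finType) (D : {set T}) (f : T -> R) (lo hi : R) :
  (0 < #|D|)%N -> (forall x, x \in D -> lo <= f x <= hi) ->
  lo <= (#|D|%:R)^-1 * \sum_(x in D) f x <= hi.
Proof.
move=> D0 H.
have Dp : 0 < (#|D|%:R : R) by rewrite ltr0n.
have S1 : \sum_(x in D) lo <= \sum_(x in D) f x.
  apply: ler_sum => x xD; by case/andP: (H x xD).
have S2 : \sum_(x in D) f x <= \sum_(x in D) hi.
  apply: ler_sum => x xD; by case/andP: (H x xD).
rewrite sumr_const in S1; rewrite (sumr_const (mem D) hi) in S2.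
rewrite -mulr_natr in S1; rewrite -mulr_natr in S2.
apply/andP; split.
  rewrite ler_pdivlMl //; by rewrite mulrC.
rewrite ler_pdivrMl //; by rewrite mulrC.
Qed.

Lemma fin_comb (L V w : R) : 0 < w -> w / 4 <= L -> L <= 4 * w ->
  w / 2 <= V -> V <= 3 * w -> 1 / 8 * L <= V <= 12 * L.
Proof. move=> *; apply/andP; split; lra. Qed.



Lemma ar1 m u : (1 < m)%N -> (0 < m * (m * (u + 2)))%N.
Proof. by move=> m1; rewrite !muln_gt0; lia. Qed.
Lemma ar2 m u : (1 < m)%N -> (m * (m * (u + 2)) <= m ^ 2 * (u + 2) * m)%N.
Proof. move=> m1. rewrite -mulnn -(mulnA m m (u + 2)); apply: leq_pmulr; lia. Qed.

Theorem mainTheorem4 :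
  exists (c C : R), 0 < c /\ 0 < C /\
  exists m0 : nat, forall m : nat, (m0 <= m)%N ->
    forall (B Ts : 'I_m -> {set 'I_(m ^ 2 * (up_log 2 m + 2) * m)}),
      (* the B_i partition [n] into blocks of size k = m^2 s *)
      (forall i j : 'I_m, i != j -> [disjoint B i & B j]) ->
      (\bigcup_(i : 'I_m) B i = setT) ->
      (forall i : 'I_m, #|B i| = (m ^ 2 * (up_log 2 m + 2))%N) ->
      (* T_i subset of B_i with |T_i| = s *)
      (forall i : 'I_m, Ts i \subset B i) ->
      (forall i : 'I_m, #|Ts i| = (up_log 2 m + 2)%N) ->
      let F := block_family B Ts in
      let L := log2 (log2 (#|F|%:R)) / log2 (#|F|%:R) in
      (c * L <= AOD F <= C * L) /\ (c * L <= avg_abundance F <= C * L).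
Proof.
exists (1/8), 12; split; first lra. split; first lra.
exists 3%N => m m3 B Ts HBd HBc HBk HTB HTs F L.
set u := up_log 2 m in B Ts HBd HBc HBk HTB HTs F L *.
have m1 : (1 < m)%N by lia.
have hu1 : (m <= 2 ^ u)%N by apply: up_logP.
have hu2 : (2 ^ u.-1 < m)%N by apply: up_log_gtn.
have u2 : (2 <= u)%N.
  case: (leqP 2 u) => // u1.
  have : (2 ^ u <= 2 ^ 1)%N by rewrite leq_exp2l.
  rewrite expn1; lia.
have e2u : (2 ^ u = 2 * 2 ^ u.-1)%N by rewrite -expnS prednK //; lia.
have e22 : (2 ^ (u + 2) = 4 * 2 ^ u)%N by rewrite expnD mulnC.
have hs2 : (2 ^ (u + 2 - 2) <= (m - 1) * (u + 2))%N by rewrite addnK; nia.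
have hms : (2 * m <= 2 ^ (u + 2))%N.
  rewrite e22; move: hu1; clear; move=> hu1; lia.
have hs3 : ((m + 1) * (u + 2) <= 2 ^ (2 * (u + 2)))%N.
  rewrite mul2n -addnn expnD; apply: leq_mul; first lia.
  exact: ltnW (ltn_expl _ (ltnSn 1)).
have Hs : (0 < u + 2)%N by rewrite addn2.
have HBk' : forall i, (u + 2 < #|B i|)%N.
  by move=> i; rewrite HBk -mulnn; nia.
pose K := (2 ^ ((m - 1) * (u + 2)))%N.
have cntL := cnt_lb HBd HTB HTs Hs.
have cntU := fun i => cnt_ub HBd HTB HTs Hs i hms.
have NL : (m * K <= #|F|)%N := N_lb HBd HTB HTs Hs HBk'.
have NU : (#|F| <= 2 * m * K)%N.
  apply: leq_trans (N_ub B Ts) _.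
  apply: leq_trans; first by apply: leq_sum => i _; exact: cntU.
  by rewrite sum_nat_const card_ord mulnA (mulnC m).
have NL' : (2 ^ ((m - 1) * (u + 2)) <= #|F|)%N by rewrite -/K; nia.
have NU' : (#|F| <= 2 ^ ((m + 1) * (u + 2)))%N.
  apply: leq_trans NU _.
  apply: (@leq_trans (2 ^ (u + 2) * K)); first by rewrite leq_mul2r hms orbT.
  rewrite /K -expnD leq_exp2l //; nia.
have [Lb1 Lb2] := Lbound m1 (ltac:(lia) : (4 <= u + 2)%N) hs2 hs3 NL' NU'.
pose T := \bigcup_(i < m) Ts i.
pose w := (m%:R : R)^-1.
have mR : 0 < (m%:R : R) by rewrite ltr0n; lia.
have wp : 0 < w by rewrite invr_gt0.
have Kp : (0 < K)%N by rewrite expn_gt0.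
have Np : (0 < #|F|)%N by nia.
have Hx : forall x, exists i, x \in B i.
  move=> x; have : x \in \bigcup_i B i by rewrite HBc inE.
  by case/bigcupP => i _ xi; exists i.
have gfact : forall x, w / 2 <= abundance F x <= 2 * w + (x \in T)%:R.
  move=> x; have [i xi] := Hx x.
  rewrite /abundance; set cx := #|[set A in F | x \in A]|.
  have c1 : (K <= cx)%N := leq_trans (cntL i) (subset_leq_card (x_lb Ts xi)).
  have c3 : (cx <= #|F|)%N.
    by apply: subset_leq_card; apply/subsetP => A; rewrite inE => /andP [].
  apply/andP; split.
    have h : 1%:R / (2 * m)%:R <= cx%:R / #|F|%:R :> R.
      apply: frac_le => //; nia.
    suff -> : w / 2 = 1%:R / (2 * m)%:R :> R by [].
    rewrite /w natrM; field.
    by rewrite gt_eqF.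
  case xT: (x \in T).
    have : cx%:R / #|F|%:R <= 1 :> R.
      by rewrite ler_pdivrMr ?ltr0n // mul1r ler_nat.
    rewrite /= mulr1n => h; apply: (le_trans h); rewrite lerDr; apply: mulr_ge0 => //; exact: ltW.
  have xT' : x \notin \bigcup_(i < m) Ts i by rewrite -/T xT.
  have c2 : (cx <= 2 * K)%N.
    apply: leq_trans (cntU i); exact: subset_leq_card (x_notT HBd xi xT').
  have h : cx%:R / #|F|%:R <= 2%:R / m%:R :> R.
    apply: frac_le => //; nia.
  by rewrite /= mulr0n addr0.
have sumU : forall D : {set 'I_(m ^ 2 * (u + 2) * m)},
    \sum_(x in D) abundance F x <= #|D|%:R * (2 * w) + (m * (u + 2))%:R.
  move=> D.
  apply: le_trans (_ : \sum_(x in D) (2 * w + (x \in T)%:R) <= _).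
    by apply: ler_sum => x _; case/andP: (gfact x).
  rewrite big_split /= sumr_const [#|D|%:R * _]mulr_natl lerD2l.
  rewrite -(card_T HBd HTB HTs) -/T.
  apply: le_trans (_ : \sum_x ((x \in T) : nat)%:R <= _).
    rewrite [X in X <= _]big_mkcond /=; apply: ler_sum => x _.
    by case: (x \in D).
  rewrite -natr_sum ler_nat -sum1_card [X in (_ <= X)%N]big_mkcond /=.
  by apply: leq_sum => x _; case: (x \in T).
have P0 := @ar1 m u m1.
have Pn := @ar2 m u m1.
have ratio : forall D : {set 'I_(m ^ 2 * (u + 2) * m)},
    (m * (m * (u + 2)) <= #|D|)%N ->
    (#|D|%:R)^-1 * \sum_(x in D) abundance F x <= 3 * w.
  move=> D HD.
  have Dp : 0 < (#|D|%:R : R) by rewrite ltr0n (leq_trans P0 HD).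
  apply: le_trans (_ : (#|D|%:R)^-1 * (#|D|%:R * (2 * w) + (m * (u + 2))%:R) <= _).
    apply: ler_wpM2l; [by rewrite invr_ge0 ltW | exact: sumU].
  rewrite mulrDr mulrA mulVf ?gt_eqF // mul1r.
  have h : (m * (u + 2))%:R / #|D|%:R <= w.
    have := @frac_le 1 m (m * (u + 2)) #|D| (ltnW m1) (leq_trans P0 HD)
      ltac:(by rewrite mul1n mulnC).
    by rewrite mulr1n mul1r.
  rewrite (mulrC _ (m * (u + 2))%:R).
  have -> : 3 * w = 2 * w + w by ring.
  by rewrite lerD2l.
have lowr : forall D : {set 'I_(m ^ 2 * (u + 2) * m)}, (0 < #|D|)%N ->
    w / 2 <= (#|D|%:R)^-1 * \sum_(x in D) abundance F x.
  move=> D D0.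
  have := @avg_bounds _ D (abundance F) (w / 2) (2 * w + 1) D0.
  case/(_ _)/andP => //.
  move=> x _; case/andP: (gfact x) => -> h /=; apply: le_trans h _.
  rewrite lerD2l; by case: (x \in T); rewrite ?mulr1n ?mulr0n ?ler01.
have Lw1 : w / 4 <= L.
  suff -> : w / 4 = 1 / (4 * m%:R) by [].
  rewrite /w; field; by rewrite gt_eqF.
have Lw2 : L <= 4 * w by [].
have i0 : 'I_m := Ordinal (ltnW m1).
have BF : B i0 \in F.
  by have := mem_F HTB HTs Hs i0 (sub0set (\bigcup_(i < m) Ts i)); rewrite setU0.
have F0 : (0 < #|F :\ set0|)%N.
  rewrite card_gt0; apply/set0Pn; exists (B i0); rewrite !inE BF andbT.
  apply/eqP => E; have := HBk' i0; by rewrite E cards0.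
have AODb : w / 2 <= AOD F <= 3 * w.
  rewrite /AOD; apply: avg_bounds F0 _.
  move=> A; rewrite !inE => /andP [A0 AF].
  have [i BA] := A_big AF.
  have cA : (m * (m * (u + 2)) <= #|A|)%N.
    apply: leq_trans (subset_leq_card BA); by rewrite HBk -mulnn -mulnA.
  apply/andP; split; [apply: lowr; exact: leq_trans P0 cA | exact: ratio].
have E' : (#|[set: 'I_(m ^ 2 * (u + 2) * m)]|%:R)^-1 *
     \sum_(x in [set: 'I_(m ^ 2 * (u + 2) * m)]) abundance F x
     = avg_abundance F.
  rewrite /avg_abundance cardsT card_ord; congr (_ * _).
  by apply: eq_bigl => x; rewrite inE.
have AVb : w / 2 <= avg_abundance F <= 3 * w.
  rewrite -E'; apply/andP; split.
    apply: lowr; rewrite cardsT card_ord; exact: leq_trans P0 Pn.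
  apply: ratio; by rewrite cardsT card_ord.
case/andP: AODb => a1 a2; case/andP: AVb => b1 b2.
by split; apply: (fin_comb wp Lw1 Lw2).
Qed.
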